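(* Let $\mathcal{W}=\{W_1,\dots,W_N\}$ be a finite set of $d\times k$ real matrices, let $\mathcal{V}$ be a linear subspace of $\mathbb{S}^d$, and let $\mathcal{C}(\mathcal{W})^*=\{\sum_{i=1}^NW_iX_iW_i^T: X_i\in\mathbb{S}^k_+\}$. Consider the semidefinite program in the variables $X\in\mathbb{S}^d$, $X_i,T_i\in\mathbb{S}^k$: $$\text{maximize }\sum_{i=1}^N\operatorname{trace}T_i\ \text{ subject to } X\in\mathcal{V},\ X=\sum_{i=1}^NW_iX_iW_i^T,\ X_i\succeq T_i,\ I\succeq T_i\succeq 0\ (i=1,\dots,N).$$ For any optimal solution $(X,X_i,T_i)$ of this program, $X\in\mathcal{V}\cap\mathcal{C}(\mathcal{W})^*$ and $\operatorname{rank}X\ge\operatorname{rank}Y$ for all $Y\in\mathcal{V}\cap\mathcal{C}(\mathcal{W})^*$.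
   Context: $\mathbb{S}^d$ denotes real symmetric $d\times d$ matrices, $\mathbb{S}^k_+$ the cone of positive semidefinite $k\times k$ matrices, and $A\succeq B$ means $A-B$ is positive semidefinite. *)

(* Defs.v *)
From HB Require Import structures.
From mathcomp Require Import all_boot all_order all_algebra.
Set Implicit Arguments. Unset Strict Implicit. Unset Printing Implicit Defensive.
Import Order.TTheory GRing.Theory Num.Theory.
Local Open Scope ring_scope.

Definition symmx (R : realFieldType) (n : nat) (A : 'M[R]_n) : Prop := A^T = A.

Definition psdmx (R : realFieldType) (n : nat) (A : 'M[R]_n) : Prop :=
  symmx A /\ forall v : 'rV[R]_n, 0 <= (v *m A *m v^T) 0 0.

Definition loewner_ge (R : realFieldType) (n : nat) (A B : 'M[R]_n) : Prop :=
  psdmx (A - B).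

Definition in_dual_cone (R : realFieldType) (N d k : nat)
    (W : 'I_N -> 'M[R]_(d, k)) (Y : 'M[R]_d) : Prop :=
  exists Xs : 'I_N -> 'M[R]_k,
    (forall i, psdmx (Xs i)) /\ Y = \sum_(i < N) W i *m Xs i *m (W i)^T.

Definition sdp_feasible (R : realFieldType) (N d k : nat)
    (W : 'I_N -> 'M[R]_(d, k)) (V : {vspace 'M[R]_d})
    (X : 'M[R]_d) (Xs Ts : 'I_N -> 'M[R]_k) : Prop :=
  [/\ symmx X, X \in V,
      X = \sum_(i < N) W i *m Xs i *m (W i)^T &
      forall i, [/\ symmx (Xs i), symmx (Ts i),
                  loewner_ge (Xs i) (Ts i),
                  loewner_ge 1%:M (Ts i) & loewner_ge (Ts i) 0]].

Definition sdp_objective (R : realFieldType) (N k : nat)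
    (Ts : 'I_N -> 'M[R]_k) : R := \sum_(i < N) \tr (Ts i).

Definition sdp_optimal (R : realFieldType) (N d k : nat)
    (W : 'I_N -> 'M[R]_(d, k)) (V : {vspace 'M[R]_d})
    (X : 'M[R]_d) (Xs Ts : 'I_N -> 'M[R]_k) : Prop :=
  sdp_feasible W V X Xs Ts /\
  forall X' Xs' Ts', sdp_feasible W V X' Xs' Ts' ->
    sdp_objective Ts' <= sdp_objective Ts.

(* Main.v *)
Require Import Defs.
From HB Require Import structures.
From mathcomp Require Import all_boot all_order all_algebra.
From mathcomp Require Import reals.
From mathcomp Require Import ring lra zify.
Import Order.TTheory GRing.Theory Num.Theory.
Set Implicit Arguments. Unset Strict Implicit. Unset Printing Implicit Defensive.
Local Open Scope ring_scope.

Definition qf (R : realFieldType) n (v : 'rV[R]_n) (A : 'M[R]_n) : R :=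
  (v *m A *m v^T) 0 0.

Lemma qfD (R : realFieldType) n (v : 'rV[R]_n) A B : qf v (A + B) = qf v A + qf v B.
Proof. by rewrite /qf mulmxDr mulmxDl mxE. Qed.

Lemma qfN (R : realFieldType) n (v : 'rV[R]_n) A : qf v (- A) = - qf v A.
Proof. by rewrite /qf mulmxN mulNmx mxE. Qed.

Lemma qfB (R : realFieldType) n (v : 'rV[R]_n) A B : qf v (A - B) = qf v A - qf v B.
Proof. by rewrite qfD qfN. Qed.

Lemma qfZ (R : realFieldType) n (v : 'rV[R]_n) a A : qf v (a *: A) = a * qf v A.
Proof. by rewrite /qf -scalemxAr -scalemxAl mxE. Qed.

Lemma qf0 (R : realFieldType) n (v : 'rV[R]_n) : qf v 0 = 0.
Proof. by rewrite /qf mulmx0 mul0mx mxE. Qed.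

Lemma qf1 (R : realFieldType) n (v : 'rV[R]_n) : qf v 1%:M = (v *m v^T) 0 0.
Proof. by rewrite /qf mulmx1. Qed.

Lemma qf_conj (R : realFieldType) n m (v : 'rV[R]_n) (W : 'M[R]_(n, m)) A :
  qf v (W *m A *m W^T) = qf (v *m W) A.
Proof. rewrite /qf. rewrite trmx_mul. by rewrite !mulmxA. Qed.

Lemma mx11 (R : realFieldType) n (a : 'rV[R]_n) (b : 'cV[R]_n) :
  (a *m b) 0 0 = (b^T *m a^T) 0 0.
Proof. by rewrite -trmx_mul [RHS]mxE. Qed.

Lemma qf_rank1 (R : realFieldType) n (w q : 'rV[R]_n) :
  qf w (q^T *m q) = ((w *m q^T) 0 0) ^+ 2.
Proof.
rewrite /qf mulmxA -mulmxA mxE big_ord1 expr2; congr (_ * _).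
by rewrite (mx11 q) trmxK.
Qed.

Lemma sym_qf (R : realFieldType) n (A : 'M[R]_n) (w r : 'rV[R]_n) :
  symmx A -> (r *m A *m w^T) 0 0 = (w *m A *m r^T) 0 0.
Proof. by move=> hA; rewrite mx11 !trmx_mul trmxK hA mulmxA. Qed.

Lemma qf_lin (R : realFieldType) n (A : 'M[R]_n) (w r : 'rV[R]_n) x y :
  symmx A ->
  qf (x *: w + y *: r) A =
  x ^+ 2 * qf w A + 2 * x * y * (w *m A *m r^T) 0 0 + y ^+ 2 * qf r A.
Proof.
move=> hA; rewrite /qf linearD /= !linearZ /= !mulmxDl !mulmxDr.
rewrite -!scalemxAl -!scalemxAr.
have e := sym_qf w r hA; move: e.
move: (w *m A *m w^T) (w *m A *m r^T) (r *m A *m w^T) (r *m A *m r^T) => s1 s2 s3 s4 e.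
rewrite !mxE e; ring.
Qed.

Lemma psd_sym (R : realFieldType) n (A : 'M[R]_n) : psdmx A -> symmx A.
Proof. by case. Qed.

Lemma psd_qf (R : realFieldType) n (A : 'M[R]_n) v : psdmx A -> 0 <= qf v A.
Proof. by case=> _ h; apply: h. Qed.

Lemma psd_CS (R : realFieldType) n (A : 'M[R]_n) (w r : 'rV[R]_n) :
  psdmx A -> ((w *m A *m r^T) 0 0) ^+ 2 <= qf w A * qf r A.
Proof.
move=> hA; have hs := psd_sym hA.
have H x y : 0 <= x ^+ 2 * qf w A + 2 * x * y * (w *m A *m r^T) 0 0 + y ^+ 2 * qf r A.
  by rewrite -qf_lin //; apply: psd_qf.
have ha := psd_qf w hA; have hc := psd_qf r hA.
move: H ha hc; move: (qf w A) ((w *m A *m r^T) 0 0) (qf r A) => a b c H ha hc.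
have [c0|c0] := eqVneq c 0.
  have := H b (- (a + 2)); rewrite c0 => h; nra.
have cp : 0 < c by rewrite lt_def c0.
have := H c (- b) => h; nra.
Qed.

Lemma psd_ker (R : realFieldType) n (A : 'M[R]_n) (v : 'rV[R]_n) :
  psdmx A -> qf v A = 0 -> v *m A = 0.
Proof.
move=> hA hv; have hs := psd_sym hA.
have hb (w : 'rV[R]_n) : (w *m A *m v^T) 0 0 = 0.
  have := psd_CS w v hA; rewrite hv mulr0.
  by move=> h; apply/eqP; rewrite -sqrf_eq0 eq_le h sqr_ge0.
have -> : v *m A = (A *m v^T)^T by rewrite trmx_mul trmxK hs.
apply/matrixP => i j; rewrite mxE [RHS]mxE (ord1 i).
by have := hb (delta_mx 0 j); rewrite -mulmxA -rowE mxE.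
Qed.

Lemma psd0 (R : realFieldType) n : psdmx (0 : 'M[R]_n).
Proof. by split; [rewrite /symmx trmx0 | move=> v; rewrite -/(qf v 0) qf0]. Qed.

Lemma psdD (R : realFieldType) n (A B : 'M[R]_n) :
  psdmx A -> psdmx B -> psdmx (A + B).
Proof.
move=> hA hB; split; first by rewrite /symmx linearD /= (psd_sym hA) (psd_sym hB).
by move=> v; rewrite -/(qf v _) qfD addr_ge0 // psd_qf.
Qed.

Lemma psdZ (R : realFieldType) n (a : R) (A : 'M[R]_n) :
  0 <= a -> psdmx A -> psdmx (a *: A).
Proof.
move=> ha hA; split; first by rewrite /symmx linearZ /= (psd_sym hA).
by move=> v; rewrite -/(qf v _) qfZ mulr_ge0 // psd_qf.
Qed.

Lemma psd_conj (R : realFieldType) n m (W : 'M[R]_(n, m)) (A : 'M[R]_m) :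
  psdmx A -> psdmx (W *m A *m W^T).
Proof.
move=> hA; split; first by rewrite /symmx !trmx_mul trmxK (psd_sym hA) mulmxA.
by move=> v; rewrite -/(qf v _) qf_conj psd_qf.
Qed.

Lemma psd_sum (R : realFieldType) n N (F : 'I_N -> 'M[R]_n) :
  (forall i, psdmx (F i)) -> psdmx (\sum_(i < N) F i).
Proof.
move=> hF; apply: (big_ind (fun A => psdmx A)) => //; first exact: psd0.
exact: psdD.
Qed.

Lemma psd_rank1 (R : realFieldType) n (q : 'rV[R]_n) : psdmx (q^T *m q).
Proof.
split; first by rewrite /symmx trmx_mul trmxK.
by move=> v; rewrite -/(qf v _) qf_rank1 sqr_ge0.
Qed.

Lemma psd_qf0_ker (R : realFieldType) n (A B : 'M[R]_n) (v : 'rV[R]_n) :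
  psdmx A -> psdmx B -> v *m (A + B) = 0 -> v *m A = 0.
Proof.
move=> hA hB h; apply: psd_ker => //.
have : qf v (A + B) = 0 by rewrite /qf h mul0mx mxE.
rewrite qfD => e; have := psd_qf v hA; have := psd_qf v hB; lra.
Qed.

Lemma psd_update (R : realFieldType) n (A : 'M[R]_n) (r q : 'rV[R]_n) (e : R) :
  psdmx A -> A *m r^T = q^T -> 0 <= e -> e * qf r A <= 1 ->
  psdmx (A - e *: (q^T *m q)).
Proof.
move=> hA hq he hec; have hs := psd_sym hA; split.
  by rewrite /symmx linearB /= linearZ /= trmx_mul trmxK hs.
move=> w; rewrite -/(qf w _) qfB qfZ qf_rank1 -hq mulmxA.
have := psd_CS w r hA; have := psd_qf w hA; have := psd_qf r hA.
move: (qf w A) (qf r A) ((w *m A *m r^T) 0 0) hec => a c b hec hc ha hb.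
have h1 : e * b ^+ 2 <= e * (a * c) by apply: ler_wpM2l.
have h2 : a * (e * c) <= a * 1 by apply: ler_wpM2l.
nra.
Qed.

Lemma psd1 (R : realFieldType) n : psdmx (1%:M : 'M[R]_n).
Proof.
split; first by rewrite /symmx trmx1.
move=> v; rewrite mulmx1 mxE; apply: sumr_ge0 => i _; rewrite mxE -expr2.
exact: sqr_ge0.
Qed.

Lemma qf_sum (R : realFieldType) n N (v : 'rV[R]_n) (F : 'I_N -> 'M[R]_n) :
  qf v (\sum_(i < N) F i) = \sum_(i < N) qf v (F i).
Proof. exact: (big_morph (qf v) (qfD v) (qf0 v)). Qed.

Lemma ker_rank (R : realFieldType) m n p (A : 'M[R]_(m, n)) (B : 'M[R]_(m, p)) :
  (forall v : 'rV[R]_m, v *m A = 0 -> v *m B = 0) -> (\rank B <= \rank A)%N.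
Proof.
move=> h.
have S : (kermx A <= kermx B)%MS.
  apply/sub_kermxP; apply/row_matrixP => i; rewrite row_mul row0; apply: h.
  by rewrite -row_mul mulmx_ker row0.
have := mxrankS S; rewrite !mxrank_ker.
have := rank_leq_row B; have := rank_leq_row A; lia.
Qed.

Lemma qf_sum_conj (R : realFieldType) n m N (v : 'rV[R]_n) (W : 'I_N -> 'M[R]_(n, m))
   (F : 'I_N -> 'M[R]_m) :
  qf v (\sum_(i < N) W i *m F i *m (W i)^T) = \sum_(i < N) qf (v *m W i) (F i).
Proof. by rewrite qf_sum; apply: eq_bigr => i _; rewrite qf_conj. Qed.

Theorem corollary2 (R : realType) (N d k : nat)
    (W : 'I_N -> 'M[R]_(d, k)) (V : {vspace 'M[R]_d})
    (hV : forall A : 'M[R]_d, A \in V -> symmx A)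
    (X : 'M[R]_d) (Xs Ts : 'I_N -> 'M[R]_k) :
  sdp_optimal W V X Xs Ts ->
  [/\ X \in V, in_dual_cone W X &
      forall Y : 'M[R]_d, Y \in V -> in_dual_cone W Y ->
        (\rank Y <= \rank X)%N].
Proof.
case=> [[hXs hXV hXdef hi] hopt].
have hXspsd i : psdmx (Xs i).
  have [_ _ h1 _ h2] := hi i.
  have -> : Xs i = (Xs i - Ts i) + (Ts i - 0) by rewrite subr0 subrK.
  exact: psdD.
have hTpsd i : psdmx (Ts i) by have [_ _ _ _ h2] := hi i; move: h2; rewrite /loewner_ge subr0.
split => //; first by exists Xs.
move=> Y hY [Ys [hYs hYdef]].
apply: ker_rank => v hvX.
case: (eqVneq (v *m Y) 0) => // hvY; exfalso.
have hYpsd : psdmx Y by rewrite hYdef; apply: psd_sum => i; apply: psd_conj.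
have qvY : 0 < qf v Y.
  rewrite lt_def psd_qf // andbT; apply/eqP => h; move: hvY; by rewrite (psd_ker hYpsd h) eqxx.
have qvX : qf v X = 0 by rewrite /qf hvX mul0mx mxE.
move: qvY qvX; rewrite hYdef hXdef !qf_sum_conj.
move=> qvY qvX.
have hX0 := psumr_eq0P (fun i _ => psd_qf (v *m W i) (hXspsd i)) qvX.
case: (boolP [exists j, 0 < qf (v *m W j) (Ys j)]); last first.
  rewrite negb_exists => /forallP hall.
  have : \sum_(i < N) qf (v *m W i) (Ys i) <= 0.
    by apply: sumr_le0 => i _; rewrite leNgt hall.
  by rewrite leNgt qvY.
case/existsP => j hj.
set u := v *m W j.
have huX : u *m Xs j = 0 by apply: psd_ker => //; apply: hX0.
set M := Xs j + Ys j.
have hMpsd : psdmx M := psdD (hXspsd j) (hYs j).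
have hkerM : (kermx M <= kermx (Xs j))%MS.
  apply/sub_kermxP; apply/row_matrixP => i; rewrite row_mul row0.
  apply: (psd_qf0_ker (hXspsd j) (hYs j)); by rewrite -row_mul mulmx_ker row0.
have huM : u *m M != 0.
  rewrite /M mulmxDr huX add0r; apply/eqP => h.
  by move: hj; rewrite /qf h mul0mx mxE ltxx.
have rXM : (\rank (Xs j) < \rank M)%N.
  have lt : (kermx M < kermx (Xs j))%MS.
    rewrite ltmxE hkerM /=; apply/negP => hs.
    have : (u <= kermx M)%MS by apply: submx_trans hs; apply/sub_kermxP.
    by move/sub_kermxP => /eqP; rewrite (negbTE huM).
  have := rank_ltmx lt; rewrite !mxrank_ker; lia.
have rTX : (\rank (Ts j) <= \rank (Xs j))%N.
  apply: ker_rank => p hp; have [_ _ h1 _ _] := hi j.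
  apply: (psd_qf0_ker (hTpsd j) h1); by rewrite addrC subrK.
have rMT := mxrankM_maxr M (Ts j).
case: (boolP [forall i, row i (kermx (M *m Ts j)) *m M == 0]).
  move/forallP => hall.
  have S : (kermx (M *m Ts j) <= kermx M)%MS.
    apply/sub_kermxP; apply/row_matrixP => i; rewrite row_mul row0; exact/eqP/hall.
  have := mxrankS S; rewrite !mxrank_ker; have h3 : (\rank (M *m Ts j) < \rank M)%N by apply: leq_ltn_trans rMT (leq_ltn_trans rTX rXM).
  move=> h2; move: h3 h2 (rank_leq_row M); clear; lia.
rewrite negb_forall => /existsP [i0 hi0].
set p := row i0 (kermx (M *m Ts j)).
have hpMT : p *m M *m Ts j = 0 by rewrite -mulmxA /p -row_mul mulmx_ker row0.
set q := p *m M.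
have hqT : q *m Ts j = 0 := hpMT.
have hq0 : q != 0 := hi0.
have hTq : Ts j *m q^T = 0.
  by rewrite -(psd_sym (hTpsd j)) -trmx_mul hqT trmx0.
have h1T : psdmx (1%:M - Ts j) by have [_ _ _ h _] := hi j.
have hc2 : 0 < qf p M.
  rewrite lt_def psd_qf // andbT; apply/eqP => h.
  by move: hq0; rewrite /q (psd_ker hMpsd h) eqxx.
have hc1 : 0 <= qf q (1%:M - Ts j) by apply: psd_qf.
set e := (qf q (1%:M - Ts j) + qf p M)^-1.
have hsum : 0 < qf q (1%:M - Ts j) + qf p M by lra.
have he : 0 < e by rewrite /e invr_gt0.
have hle c : 0 <= c -> c <= qf q (1%:M - Ts j) + qf p M -> e * c <= 1.
  move=> h0 h; rewrite mulrC ler_pdivrMr // mul1r //.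
have hupd1 : psdmx ((1%:M - Ts j) - e *: (q^T *m q)).
  apply: (psd_update (r := q)) => //; first by rewrite mulmxDl mulNmx mul1mx hTq subr0.
    exact: ltW.
  by apply: hle => //; lra.
have hupd2 : psdmx (M - e *: (q^T *m q)).
  apply: (psd_update (r := p)) => //; first by rewrite /q trmx_mul (psd_sym hMpsd).
    exact: ltW.
  by apply: hle; [apply: psd_qf | lra].
pose Ts' := fun i => if i == j then Ts j + e *: (q^T *m q) else Ts i.
pose Xs' := fun i => Xs i + (Xs i + Ys i).
have feas : sdp_feasible W V (X + (X + Y)) Xs' Ts'.
  split.
  - by rewrite /symmx !linearD /= hXs (hV _ hY).
  - by rewrite memvD // memvD.
  - rewrite hXdef hYdef -!big_split /=; apply: eq_bigr => i _.
    by rewrite /Xs' !mulmxDr !mulmxDl.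
  move=> i; rewrite /Ts' /Xs'; case: (eqVneq i j) => [->|hij].
    split.
    + exact: psd_sym (psdD (hXspsd j) hMpsd).
    + exact: psd_sym (psdD (hTpsd j) (psdZ (ltW he) (psd_rank1 q))).
    + rewrite /loewner_ge.
      have -> : Xs j + (Xs j + Ys j) - (Ts j + e *: (q^T *m q)) =
                (Xs j - Ts j) + (M - e *: (q^T *m q)) by rewrite /M opprD addrACA.
      by have [_ _ h _ _] := hi j; apply: psdD.
    + by rewrite /loewner_ge opprD addrA.
    + by rewrite /loewner_ge subr0; apply: psdD (hTpsd j) (psdZ (ltW he) (psd_rank1 q)).
  have [h1 h2 h3 h4 h5] := hi i; split => //.
    exact: psd_sym (psdD (hXspsd i) (psdD (hXspsd i) (hYs i))).
  rewrite /loewner_ge.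
  have -> : Xs i + (Xs i + Ys i) - Ts i = (Xs i - Ts i) + (Xs i + Ys i) by rewrite addrAC.
  exact: psdD h3 (psdD (hXspsd i) (hYs i)).
have := hopt _ _ _ feas; rewrite /sdp_objective.
rewrite (bigD1 j) //= [Z in _ <= Z](bigD1 j) //= /Ts' eqxx.
rewrite (eq_bigr (fun i => \tr (Ts i))); last by move=> i /negbTE ->.
rewrite mxtraceD mxtraceZ.
have htr : \tr (q^T *m q) = qf q 1%:M by rewrite mxtrace_mulC /mxtrace big_ord1 /qf mulmx1.
have hq1 : 0 < qf q 1%:M.
  rewrite lt_def (psd_qf q (psd1 _ _)) andbT; apply/eqP => h.
  by move: hq0; have := psd_ker (psd1 _ _) h; rewrite mulmx1 => ->; rewrite eqxx.
rewrite htr; have := mulr_gt0 he hq1; lra.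
Qed.
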